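(* Assume $0<q_{00}<1$, $\theta_1>0$, that $p_{00}$ and $p_{10}$ have finite moment generating functions in a neighbourhood of $0$, and that $M$ is diagonalizable. Let $\mu_t=\mathbb E[Y_t]$ and, for integers $k\ge1$, $\mu^0_k=\frac{\theta_1}{q_{00}}(M^k)_{00}$ (the expectation of $Y_k$ when $\nu=e_0$). Then the covariance matrix $\Sigma_{tt'}=\mathrm{Cov}(Y_t,Y_{t'})$ satisfies, for $t=1,\dots,T$, $$\Sigma_{tt}=\big(\theta_1(\theta_3+1)+1-\mu_t\big)\mu_t,$$ and for $1\le t'<t\le T$, $$\Sigma_{tt'}=\left[\Big(\theta_2-q_{00}\frac{1-\theta_2}{1-q_{00}}\Big)\mu^0_{t-t'}+\frac{1-\theta_2}{1-q_{00}}\mu^0_{t-t'+1}-\mu_t\right]\mu_{t'}.$$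
   Context: Hidden two-timescale Markov model (HTMM). Fix integers $r\ge 1$, $T\ge 1$ and $\mathcal S=\{0,1,\dots,r\}$. Let $q_{xz}\in[0,1]$ for $x\in\mathcal S$, $z\in\{0,\dots,r-1\}$, with $\sum_{x}q_{xz}=1$ for each such $z$. Define column-stochastic matrices $M^{\ell}$, $M^{s}$ indexed by $\mathcal S$: column $0$ of $M^\ell$ is $e_0$, column $r$ of $M^\ell$ is $e_r$, $M^\ell_{xz}=q_{xz}$ for $1\le z\le r-1$; column $0$ of $M^s$ is $(q_{00},\dots,q_{r0})^{\mathrm T}$ and $M^s_{xz}=\delta_{xz}$ for $z\ge 1$. Set $M=M^sM^\ell$. Let $p_{00},p_{10}$ be probability distributions on $\mathbb N_0$; put $p_{x0}:=p_{10}$ for $x\ge1$ and $p_{xx'}:=\delta_0$ for $x'\ne0$. Let $\nu$ be a probability vector on $\mathcal S$. The HTMM is the random vector $(X_0,X'_1,X_1,Y_1,\dots,X'_T,X_T,Y_T)$ with joint law $\mathbb P(X_0=x_0,X'_t=x'_t,X_t=x_t,Y_t=y_t,1\le t\le T)=\nu_{x_0}\prod_{t=1}^T M^\ell_{x'_tx_{t-1}}M^s_{x_tx'_t}p_{x_tx'_t}(y_t)$. Inner-model parameters (independent of $t$): $\theta_1=\mathbb E[Y_t\mid X'_t=0]$, $\theta_2=q_{00}\,\mathbb E[Y_t\mid X'_t=X_t=0]/\theta_1$, $\theta_3=\mathrm{Var}[Y_t\mid X'_t=0]/\theta_1^2-1/\theta_1$. *)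

(* Defs.v *)
From Stdlib Require Import Reals Lra Lia Arith ClassicalEpsilon.
Open Scope R_scope.

(** Generic limit of a real sequence (chosen by classical choice;
    meaningful when the sequence converges). *)
Definition Rlim (u : nat -> R) : R :=
  epsilon (inhabits 0) (fun l => Un_cv u l).

Definition Rseries (f : nat -> R) : R := Rlim (fun n => sum_f_R0 f n).

Definition is_prob_nat (p : nat -> R) : Prop :=
  (forall y, 0 <= p y) /\ infinite_sum p 1.

Definition finite_mgf_near0 (p : nat -> R) : Prop :=
  exists delta, 0 < delta /\
    forall s, Rabs s < delta ->
      exists l, infinite_sum (fun y => p y * exp (s * INR y)) l.

Definition mean_nat (p : nat -> R) : R := Rseries (fun y => INR y * p y).
Definition mom2_nat (p : nat -> R) : R := Rseries (fun y => INR y ^ 2 * p y).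

Definition kd (i j : nat) : R := if Nat.eqb i j then 1 else 0.

(** Square matrices indexed by S = {0,...,r}, as functions nat -> nat -> R. *)
Definition mmul (r : nat) (A B : nat -> nat -> R) : nat -> nat -> R :=
  fun i j => sum_f_R0 (fun k => A i k * B k j) r.

Fixpoint mpow (r : nat) (A : nat -> nat -> R) (k : nat) : nat -> nat -> R :=
  match k with
  | O => kd
  | S k' => mmul r A (mpow r A k')
  end.

Definition Ml (r : nat) (q : nat -> nat -> R) : nat -> nat -> R :=
  fun x z => if Nat.eqb z O then kd x O
             else if Nat.eqb z r then kd x r
             else q x z.

Definition Ms (q : nat -> nat -> R) : nat -> nat -> R :=
  fun x z => if Nat.eqb z O then q x O else kd x z.

Definition Mmat (r : nat) (q : nat -> nat -> R) : nat -> nat -> R :=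
  mmul r (Ms q) (Ml r q).

Definition pem (p00 p10 : nat -> R) (x x' : nat) : nat -> R :=
  fun y => if Nat.eqb x' O then (if Nat.eqb x O then p00 y else p10 y)
           else kd y O.

Definition Cx : Type := (R * R)%type.
Definition Cadd (a b : Cx) : Cx := (fst a + fst b, snd a + snd b).
Definition Cmul (a b : Cx) : Cx :=
  (fst a * fst b - snd a * snd b, fst a * snd b + snd a * fst b).
Fixpoint Csum (f : nat -> Cx) (n : nat) : Cx :=
  match n with
  | O => f O
  | S n' => Cadd (Csum f n') (f n)
  end.
Definition cmmul (r : nat) (A B : nat -> nat -> Cx) : nat -> nat -> Cx :=
  fun i j => Csum (fun k => Cmul (A i k) (B k j)) r.
Definition ckd (i j : nat) : Cx := (kd i j, 0).
Definition cdiag (d : nat -> Cx) : nat -> nat -> Cx :=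
  fun i j => if Nat.eqb i j then d i else (0, 0).

Definition diagonalizable (r : nat) (A : nat -> nat -> R) : Prop :=
  exists (P Q : nat -> nat -> Cx) (d : nat -> Cx),
    (forall i j, (i <= r)%nat -> (j <= r)%nat -> cmmul r P Q i j = ckd i j) /\
    (forall i j, (i <= r)%nat -> (j <= r)%nat -> cmmul r Q P i j = ckd i j) /\
    (forall i j, (i <= r)%nat -> (j <= r)%nat ->
        (A i j, 0) = cmmul r (cmmul r P (cdiag d)) Q i j).

Definition upd (f : nat -> nat) (i k : nat) : nat -> nat :=
  fun j => if Nat.eqb j i then k else f j.

(** sum of F over all f : nat -> nat with f t in {0..K} for t = 1..T
    (and f t = 0 elsewhere). *)
Fixpoint sumT (T K : nat) (F : (nat -> nat) -> R) : R :=
  match T with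
  | O => F (fun _ => O)
  | S T' => sum_f_R0 (fun k => sumT T' K (fun f => F (upd f (S T') k))) K
  end.

Fixpoint prod1 (T : nat) (g : nat -> R) : R :=
  match T with
  | O => 1
  | S T' => prod1 T' g * g (S T')
  end.

(** Joint probability of (X_0 = xs 0, X'_t = xps t, X_t = xs t, Y_t = ys t). *)
Definition htmm_weight (r T : nat) (q : nat -> nat -> R) (p00 p10 : nat -> R)
  (nu : nat -> R) (xs xps ys : nat -> nat) : R :=
  nu (xs O) *
  prod1 T (fun t => Ml r q (xps t) (xs (t - 1)%nat) * Ms q (xs t) (xps t)
                     * pem p00 p10 (xs t) (xps t) (ys t)).

(** E[F(Y)] with Y-values truncated at N (hidden states summed over S). *)
Definition htmm_ET (r T : nat) (q : nat -> nat -> R) (p00 p10 : nat -> R)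
  (nu : nat -> R) (F : (nat -> nat) -> R) (N : nat) : R :=
  sum_f_R0 (fun x0 =>
    sumT T r (fun xs =>
      sumT T r (fun xps =>
        sumT T N (fun ys =>
          htmm_weight r T q p00 p10 nu (upd xs O x0) xps ys * F ys)))) r.

(** Expectation of a nonnegative functional F of (Y_1..Y_T):
    monotone limit of the truncated sums. *)
Definition htmm_E (r T : nat) (q : nat -> nat -> R) (p00 p10 : nat -> R)
  (nu : nat -> R) (F : (nat -> nat) -> R) : R :=
  Rlim (htmm_ET r T q p00 p10 nu F).

Definition htmm_mean (r T : nat) q p00 p10 nu (t : nat) : R :=
  htmm_E r T q p00 p10 nu (fun ys => INR (ys t)).

Definition htmm_cov (r T : nat) q p00 p10 nu (t t' : nat) : R :=
  htmm_E r T q p00 p10 nu (fun ys => INR (ys t) * INR (ys t'))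
  - htmm_mean r T q p00 p10 nu t * htmm_mean r T q p00 p10 nu t'.

(** Inner-model parameters. Given X'_t = 0: X_t = x w.p. q_{x0},
    and Y_t ~ p_{x0}. *)
Definition theta1 (r : nat) q p00 p10 : R :=
  sum_f_R0 (fun x => q x O * mean_nat (pem p00 p10 x O)) r.

Definition theta2 (r : nat) q p00 p10 : R :=
  q O O * mean_nat (pem p00 p10 O O) / theta1 r q p00 p10.

Definition inner_var (r : nat) q p00 p10 : R :=
  sum_f_R0 (fun x => q x O * mom2_nat (pem p00 p10 x O)) r
  - (theta1 r q p00 p10) ^ 2.

Definition theta3 (r : nat) q p00 p10 : R :=
  inner_var r q p00 p10 / (theta1 r q p00 p10) ^ 2 - 1 / theta1 r q p00 p10.

Definition mu0 (r : nat) q p00 p10 (k : nat) : R :=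
  theta1 r q p00 p10 / q O O * mpow r (Mmat r q) k O O.

(* Main.v *)
Require Import Defs.
From Stdlib Require Import Reals Lra Lia Arith ClassicalEpsilon FunctionalExtensionality.
Open Scope R_scope.

Lemma Rlim_unique u l : Un_cv u l -> Rlim u = l.
Proof.
  intro H. unfold Rlim.
  assert (E : exists l, Un_cv u l) by (exists l; exact H).
  pose proof (epsilon_spec (inhabits 0) _ E) as H2.
  eapply UL_sequence; eauto.
Qed.

Lemma CV_const_l c : Un_cv (fun _ => c) c.
Proof. intros e He. exists O. intros. unfold Rdist. rewrite Rminus_diag, Rabs_R0. lra. Qed.

Lemma sum_scal_l c u n : sum_f_R0 (fun i => c * u i) n = c * sum_f_R0 u n.
Proof. induction n; simpl; [|rewrite IHn]; ring. Qed.

Lemma sum_swap (f : nat -> nat -> R) n m :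
  sum_f_R0 (fun i => sum_f_R0 (fun j => f i j) m) n =
  sum_f_R0 (fun j => sum_f_R0 (fun i => f i j) n) m.
Proof.
  induction n; simpl.
  - reflexivity.
  - rewrite IHn, <- sum_plus. reflexivity.
Qed.

Lemma sum_ext u v n : (forall i, u i = v i) -> sum_f_R0 u n = sum_f_R0 v n.
Proof. intros; apply sum_eq; auto. Qed.

Lemma sum_kd_l (h : nat -> R) n : sum_f_R0 (fun y => kd y 0 * h y) n = h O.
Proof. induction n; simpl; [unfold kd; simpl; ring|rewrite IHn; unfold kd; simpl; ring]. Qed.

Lemma sum_kd_one l n : (l <= n)%nat -> sum_f_R0 (fun x => kd x l) n = 1.
Proof.
  induction n; intros H; simpl.
  - assert (l = O) by lia; subst; reflexivity.
  - destruct (Nat.eq_dec l (S n)).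
    + subst. rewrite (sum_eq _ (fun _ => 0)).
      * assert (Z : forall m, sum_f_R0 (fun _ => 0) m = 0) by (induction m; simpl; [|rewrite IHm]; ring).
        rewrite Z. unfold kd. rewrite Nat.eqb_refl. ring.
      * intros i Hi. unfold kd. destruct (Nat.eqb_spec i (S n)); [lia|reflexivity].
    + rewrite IHn by lia. unfold kd. destruct (Nat.eqb_spec (S n) l); [lia|ring].
Qed.

Lemma CV_sum (u : nat -> nat -> R) (l : nat -> R) n :
  (forall i, Un_cv (fun N => u N i) (l i)) ->
  Un_cv (fun N => sum_f_R0 (u N) n) (sum_f_R0 l n).
Proof.
  intros H. induction n; simpl; [apply H|apply CV_plus; auto].
Qed.

Lemma CV_ext u v l : (forall N, u N = v N) -> Un_cv u l -> Un_cv v l.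
Proof. intros E H e He. destruct (H e He) as [N HN]. exists N. intros. rewrite <- E. auto. Qed.

Lemma prod1_ext T a b : (forall s, (1 <= s <= T)%nat -> a s = b s) -> prod1 T a = prod1 T b.
Proof.
  induction T; intros H; cbn [prod1]; [reflexivity|].
  rewrite IHT by (intros; apply H; lia). rewrite H by lia. reflexivity.
Qed.

Lemma prod1_mul T a b : prod1 T (fun s => a s * b s) = prod1 T a * prod1 T b.
Proof. induction T; simpl; [ring|rewrite IHT; ring]. Qed.

Lemma CV_prod1 T (u : nat -> nat -> R) (l : nat -> R) :
  (forall s, Un_cv (fun N => u N s) (l s)) ->
  Un_cv (fun N => prod1 T (u N)) (prod1 T l).
Proof.
  intros H. induction T; simpl; [apply CV_const_l|apply CV_mult; auto].
Qed.

Lemma prod1_one_gt T t a : (T < t)%nat -> prod1 T (fun s => if Nat.eqb s t then a else 1) = 1.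
Proof.
  induction T; intros H; cbn [prod1]; [reflexivity|].
  rewrite IHT by lia. destruct (Nat.eqb_spec (S T) t); [lia|]. ring.
Qed.

Lemma prod1_one T t a : (1 <= t <= T)%nat -> prod1 T (fun s => if Nat.eqb s t then a else 1) = a.
Proof.
  induction T; intros H; cbn [prod1]; [lia|].
  destruct (Nat.eqb_spec (S T) t).
  - subst. rewrite prod1_one_gt by lia. ring.
  - rewrite IHT by lia. ring.
Qed.

Lemma upd_eq f i k : upd f i k i = k.
Proof. unfold upd. rewrite Nat.eqb_refl. reflexivity. Qed.
Lemma upd_neq f i k s : s <> i -> upd f i k s = f s.
Proof. intros H. unfold upd. destruct (Nat.eqb_spec s i); [lia|reflexivity]. Qed.
Lemma upd_upd_other f i j k x s : s <> j -> upd (upd f j k) i x s = upd f i x s.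
Proof. intros H. unfold upd. destruct (Nat.eqb_spec s i); [reflexivity|].
  destruct (Nat.eqb_spec s j); [lia|reflexivity]. Qed.

Lemma sumT_ext T K F G : (forall f, F f = G f) -> sumT T K F = sumT T K G.
Proof.
  revert F G. induction T; intros F G H; simpl; [apply H|].
  apply sum_ext. intro k. apply IHT. intro f. apply H.
Qed.

Lemma sumT_scal T K c F : sumT T K (fun f => c * F f) = c * sumT T K F.
Proof.
  revert F. induction T; intros F; simpl; [reflexivity|].
  rewrite <- sum_scal_l. apply sum_ext. intro k. apply IHT.
Qed.

Lemma sumT_sum T K (F : nat -> (nat -> nat) -> R) n :
  sumT T K (fun f => sum_f_R0 (fun i => F i f) n) = sum_f_R0 (fun i => sumT T K (F i)) n.
Proof.
  revert F. induction T; intros F; simpl; [reflexivity|].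
  rewrite (sum_ext _ (fun k => sum_f_R0 (fun i => sumT T K (fun f => F i (upd f (S T) k))) n)).
  - apply sum_swap.
  - intro k. apply (IHT (fun i f => F i (upd f (S T) k))).
Qed.

Lemma CV_sumT T K (F : nat -> (nat -> nat) -> R) L :
  (forall f, Un_cv (fun N => F N f) (L f)) ->
  Un_cv (fun N => sumT T K (F N)) (sumT T K L).
Proof.
  revert F L. induction T; intros F L H; simpl; [apply H|].
  apply (CV_sum (fun N k => sumT T K (fun f => F N (upd f (S T) k)))).
  intro k. apply (IHT (fun N f => F N (upd f (S T) k))). intro f. apply H.
Qed.

Lemma sumT_factor T K C (h : nat -> nat -> R) :
  sumT T K (fun f => C * prod1 T (fun s => h s (f s))) = C * prod1 T (fun s => sum_f_R0 (h s) K).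
Proof.
  revert C. induction T; intros C; simpl; [reflexivity|].
  rewrite (sum_ext _ (fun k => (prod1 T (fun s => sum_f_R0 (h s) K)) * (C * h (S T) k))).
  - rewrite sum_scal_l, sum_scal_l. ring.
  - intro k. rewrite Rmult_comm. rewrite <- (IHT (C * h (S T) k)). apply sumT_ext. intro f.
    rewrite upd_eq. rewrite (prod1_ext T _ (fun s => h s (f s))).
    + ring.
    + intros s Hs. rewrite upd_neq by lia. reflexivity.
Qed.
Fixpoint alpha (r : nat) (nu : nat -> R) (K : nat -> nat -> nat -> R) (s : nat) : nat -> R :=
  match s with
  | O => nu
  | S s' => fun x => sum_f_R0 (fun y => alpha r nu K s' y * K (S s') y x) r
  end.

Lemma chain r nu K T : forall G,
  sum_f_R0 (fun x0 => nu x0 * sumT T r (fun xs =>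
     prod1 T (fun s => K s (upd xs 0 x0 (s - 1)%nat) (upd xs 0 x0 s)) * G (upd xs 0 x0 T))) r
  = sum_f_R0 (fun x => alpha r nu K T x * G x) r.
Proof.
  induction T; intros G.
  - cbn [sumT prod1 alpha]. apply sum_ext. intro x0. rewrite upd_eq. ring.
  - set (G' := fun z => sum_f_R0 (fun k => K (S T) z k * G k) r).
    transitivity (sum_f_R0 (fun x => alpha r nu K T x * G' x) r).
    + rewrite <- IHT. apply sum_ext. intro x0. f_equal. cbn [sumT].
      rewrite <- sumT_sum. apply sumT_ext. intro f. unfold G'.
      rewrite <- sum_scal_l. apply sum_ext. intro k. cbn [prod1].
      rewrite (prod1_ext T _ (fun s => K s (upd f 0 x0 (s - 1)%nat) (upd f 0 x0 s))).
      * replace (S T - 1)%nat with T by lia.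
        rewrite (upd_upd_other f 0 (S T) k x0 T) by lia.
        rewrite (upd_neq _ 0 x0 (S T)) by lia. rewrite upd_eq. ring.
      * intros s Hs. rewrite upd_upd_other by lia. rewrite upd_upd_other by lia. reflexivity.
    + unfold G'. cbn [alpha].
      rewrite (sum_ext _ (fun x => sum_f_R0 (fun k => alpha r nu K T x * K (S T) x k * G k) r)).
      * rewrite sum_swap. apply sum_ext. intro k.
        rewrite (sum_ext _ (fun y => G k * (alpha r nu K T y * K (S T) y k))) by (intro; ring).
        rewrite sum_scal_l. ring.
      * intro x. rewrite <- sum_scal_l. apply sum_ext. intro; ring.
Qed.

Lemma series_cv f : (exists l, Un_cv (sum_f_R0 f) l) -> Un_cv (sum_f_R0 f) (Rseries f).
Proof. intros [l H]. unfold Rseries. rewrite (Rlim_unique (fun n => sum_f_R0 f n) l H). exact H. Qed.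

Lemma exp_ge1x x : 1 + x <= exp x.
Proof. destruct (Req_dec x 0). subst. rewrite exp_0. lra. left. apply exp_ineq1; auto. Qed.

Lemma pow_bound s z m : 0 < s -> 0 <= z -> (m <= 2)%nat ->
  z ^ m <= (1 + 1/s + 4/(s*s)) * exp (s*z).
Proof.
  intros Hs Hz Hm.
  set (E := exp (s*z)).
  assert (E1 : 1 + s*z <= E) by apply exp_ge1x.
  assert (E2 : (1 + s*z/2) * (1 + s*z/2) <= E).
  { unfold E. replace (s*z) with (s*z/2 + s*z/2) by field. rewrite exp_plus.
    pose proof (exp_ge1x (s*z/2)). assert (0 <= s*z/2) by (apply Rmult_le_pos; [nra|lra]).
    apply Rmult_le_compat; lra. }
  set (u := 1/s). assert (Hu : s * u = 1) by (unfold u; field; lra).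
  assert (Hu0 : 0 < u) by (unfold u; apply Rdiv_lt_0_compat; lra).
  replace (4/(s*s)) with (4*u*u) by (unfold u; field; lra).
  assert (HE : 0 < E) by apply exp_pos.
  destruct m as [|[|[|m]]]; simpl; try lia.
  - nra.
  - assert (z <= u * E).
    { assert (z = u * (s*z)) by (rewrite <- Rmult_assoc, (Rmult_comm u s), Hu; ring). nra. }
    nra.
  - assert (z*z <= 4*u*u*E).
    { assert (z = u*(s*z)) by (rewrite <- Rmult_assoc, (Rmult_comm u s), Hu; ring).
      assert ((s*z)*(s*z) <= 4*E) by nra.
      assert (z*z = u*u*((s*z)*(s*z))) by (rewrite H at 1; rewrite H at 1; ring). 
      rewrite H1. assert (0 <= u*u) by nra. nra. }
    nra.
Qed.

Lemma mom_exists p m : is_prob_nat p -> finite_mgf_near0 p -> (m <= 2)%nat ->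
  exists l, Un_cv (sum_f_R0 (fun y => INR y ^ m * p y)) l.
Proof.
  intros [Hp0 _] [d [Hd Hmgf]] Hm.
  destruct (Hmgf (d/2)) as [l0 Hl0].
  { rewrite Rabs_pos_eq; lra. }
  set (C := 1 + 1/(d/2) + 4/((d/2)*(d/2))).
  assert (HB : Un_cv (sum_f_R0 (fun y => C * (p y * exp (d/2 * INR y)))) (C * l0)).
  { eapply CV_ext. intro N. symmetry. apply sum_scal_l.
    apply CV_mult. apply CV_const_l. exact Hl0. }
  destruct (Rseries_CV_comp (fun y => INR y ^ m * p y) (fun y => C * (p y * exp (d/2 * INR y))))
    as [l Hl].
  - intro y. split.
    + apply Rmult_le_pos; [apply pow_le, pos_INR|apply Hp0].
    + pose proof (pow_bound (d/2) (INR y) m ltac:(lra) (pos_INR y) Hm). fold C in H.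
      pose proof (Hp0 y). nra.
  - exists (C*l0). exact HB.
  - exists l. exact Hl.
Qed.

Definition EN p00 p10 (n : nat -> nat) N s x x' :=
  sum_f_R0 (fun y => INR y ^ n s * pem p00 p10 x x' y) N.
Definition EE p00 p10 (n : nat -> nat) s x x' :=
  Rseries (fun y => INR y ^ n s * pem p00 p10 x x' y).
Definition Kk r q p00 p10 n s y x :=
  sum_f_R0 (fun x' => Ml r q x' y * Ms q x x' * EE p00 p10 n s x x') r.

Lemma ET_eq r T q p00 p10 nu n N :
  htmm_ET r T q p00 p10 nu (fun ys => prod1 T (fun s => INR (ys s) ^ n s)) N =
  sum_f_R0 (fun x0 => sumT T r (fun xs => sumT T r (fun xps =>
    nu x0 * prod1 T (fun s => Ml r q (xps s) (upd xs 0 x0 (s-1)%nat) * Ms q (upd xs 0 x0 s) (xps s)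
       * EN p00 p10 n N s (upd xs 0 x0 s) (xps s))))) r.
Proof.
  unfold htmm_ET. apply sum_ext; intro x0; apply sumT_ext; intro xs; apply sumT_ext; intro xps.
  unfold htmm_weight. rewrite upd_eq.
  pose (h := fun s y => Ml r q (xps s) (upd xs 0 x0 (s-1)%nat) * Ms q (upd xs 0 x0 s) (xps s)
        * (INR y ^ n s * pem p00 p10 (upd xs 0 x0 s) (xps s) y)).
  transitivity (sumT T N (fun ys => nu x0 * prod1 T (fun s => h s (ys s)))).
  - apply sumT_ext. intro ys. rewrite Rmult_assoc. f_equal. rewrite <- prod1_mul.
    apply prod1_ext. intros s _. unfold h. ring.
  - rewrite sumT_factor. f_equal. apply prod1_ext. intros s _. unfold EN.
    rewrite <- sum_scal_l. unfold h. apply sum_ext. intro; ring.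
Qed.

Lemma EN_cv p00 p10 n s x x' :
  is_prob_nat p00 -> is_prob_nat p10 -> finite_mgf_near0 p00 -> finite_mgf_near0 p10 ->
  (n s <= 2)%nat ->
  Un_cv (fun N => EN p00 p10 n N s x x') (EE p00 p10 n s x x').
Proof.
  intros h0 h1 m0 m1 hn. unfold EN, EE. apply series_cv.
  unfold pem. destruct (Nat.eqb x' 0).
  - destruct (Nat.eqb x 0); apply mom_exists; auto.
  - exists (INR 0 ^ n s). eapply CV_ext; [|apply CV_const_l]. intro N.
    rewrite <- (sum_kd_l (fun y => INR y ^ n s) N). apply sum_ext. intro; ring.
Qed.

Lemma main_E r T q p00 p10 nu n :
  is_prob_nat p00 -> is_prob_nat p10 -> finite_mgf_near0 p00 -> finite_mgf_near0 p10 ->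
  (forall s, n s <= 2)%nat ->
  htmm_E r T q p00 p10 nu (fun ys => prod1 T (fun s => INR (ys s) ^ n s)) =
  sum_f_R0 (alpha r nu (Kk r q p00 p10 n) T) r.
Proof.
  intros h0 h1 m0 m1 hn. unfold htmm_E. apply Rlim_unique.
  eapply CV_ext. intro N. symmetry. apply ET_eq.
  match goal with |- Un_cv _ ?l => replace l with
   (sum_f_R0 (fun x0 => sumT T r (fun xs => sumT T r (fun xps =>
    nu x0 * prod1 T (fun s => Ml r q (xps s) (upd xs 0 x0 (s-1)%nat) * Ms q (upd xs 0 x0 s) (xps s)
       * EE p00 p10 n s (upd xs 0 x0 s) (xps s))))) r) end.
  - apply (CV_sum (fun N x0 => sumT T r (fun xs => sumT T r (fun xps =>
    nu x0 * prod1 T (fun s => Ml r q (xps s) (upd xs 0 x0 (s-1)%nat) * Ms q (upd xs 0 x0 s) (xps s)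
       * EN p00 p10 n N s (upd xs 0 x0 s) (xps s)))))). intro x0.
    apply (CV_sumT T r (fun N xs => sumT T r (fun xps =>
    nu x0 * prod1 T (fun s => Ml r q (xps s) (upd xs 0 x0 (s-1)%nat) * Ms q (upd xs 0 x0 s) (xps s)
       * EN p00 p10 n N s (upd xs 0 x0 s) (xps s))))). intro xs.
    apply (CV_sumT T r (fun N xps =>
    nu x0 * prod1 T (fun s => Ml r q (xps s) (upd xs 0 x0 (s-1)%nat) * Ms q (upd xs 0 x0 s) (xps s)
       * EN p00 p10 n N s (upd xs 0 x0 s) (xps s)))). intro xps.
    apply CV_mult. apply CV_const_l.
    apply (CV_prod1 T (fun N s => Ml r q (xps s) (upd xs 0 x0 (s-1)%nat) * Ms q (upd xs 0 x0 s) (xps s)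
       * EN p00 p10 n N s (upd xs 0 x0 s) (xps s))). intro s.
    apply CV_mult. apply CV_const_l. apply EN_cv; auto.
  - transitivity (sum_f_R0 (fun x => alpha r nu (Kk r q p00 p10 n) T x * (fun _ => 1) x) r).
    + rewrite <- chain. apply sum_ext. intro x0. rewrite <- sumT_scal. apply sumT_ext. intro xs.
      rewrite Rmult_1_r.
      rewrite (sumT_factor T r (nu x0) (fun s x' => Ml r q x' (upd xs 0 x0 (s-1)%nat) * Ms q (upd xs 0 x0 s) x'
       * EE p00 p10 n s (upd xs 0 x0 s) x')). reflexivity.
    + apply sum_ext. intro; ring.
Qed.

Lemma sum_first (f : nat -> R) n : (forall i, (1 <= i)%nat -> f i = 0) -> sum_f_R0 f n = f O.
Proof. intros H. induction n; simpl; [reflexivity|rewrite IHn, (H (S n)) by lia; ring]. Qed.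

Lemma sum_kd_pick (f : nat -> R) x n : (x <= n)%nat -> sum_f_R0 (fun z => kd x z * f z) n = f x.
Proof.
  intros H. rewrite (sum_ext _ (fun z => f x * kd z x)).
  - rewrite sum_scal_l, sum_kd_one by exact H. ring.
  - intro z. unfold kd. destruct (Nat.eqb_spec x z), (Nat.eqb_spec z x); subst; try lia; ring.
Qed.

Lemma EE_nz p00 p10 n s x x' : x' <> O -> EE p00 p10 n s x x' = INR 0 ^ n s.
Proof.
  intros H. unfold EE, Rseries. apply Rlim_unique. eapply CV_ext; [|apply CV_const_l].
  intro N. unfold pem. destruct (Nat.eqb_spec x' 0); [lia|].
  rewrite <- (sum_kd_l (fun y => INR y ^ n s) N). apply sum_ext. intro; ring.
Qed.

Lemma mom0 p : is_prob_nat p -> Rseries (fun y => INR y ^ 0 * p y) = 1.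
Proof.
  intros [_ H]. unfold Rseries. apply Rlim_unique. eapply CV_ext; [|exact H].
  intro N. apply sum_ext. intro; simpl; ring.
Qed.

Lemma EE_zero p00 p10 n s x x' : is_prob_nat p00 -> is_prob_nat p10 -> n s = O ->
  EE p00 p10 n s x x' = 1.
Proof.
  intros h0 h1 hn. destruct (Nat.eq_dec x' 0).
  - subst. unfold EE, pem. rewrite hn. simpl.
    destruct (Nat.eqb x 0); apply mom0; auto.
  - rewrite EE_nz by auto. rewrite hn. reflexivity.
Qed.

Lemma Kk_zero r q p00 p10 n s y x : is_prob_nat p00 -> is_prob_nat p10 -> n s = O ->
  Kk r q p00 p10 n s y x = Mmat r q x y.
Proof.
  intros h0 h1 hn. unfold Kk, Mmat, mmul. apply sum_ext. intro x'.
  rewrite EE_zero by auto. ring.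
Qed.

Lemma Kk_pos r q p00 p10 n s y x : (1 <= n s)%nat ->
  Kk r q p00 p10 n s y x = Ml r q 0 y * q x O * EE p00 p10 n s x 0.
Proof.
  intros hn. unfold Kk. rewrite sum_first.
  - unfold Ms. simpl. reflexivity.
  - intros i Hi. rewrite EE_nz by lia. destruct (n s) as [|m]; [lia|]. simpl. ring.
Qed.

Lemma Mmat_0y r q y : Mmat r q 0 y = q O O * Ml r q 0 y.
Proof.
  unfold Mmat, mmul. rewrite sum_first.
  - unfold Ms. simpl. reflexivity.
  - intros i Hi. unfold Ms, kd. destruct i; [lia|]. simpl. ring.
Qed.

Lemma Mmat_x0 r q x : Mmat r q x 0 = q x O.
Proof.
  unfold Mmat, mmul. rewrite (sum_ext _ (fun k => kd k 0 * Ms q x k)).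
  - rewrite sum_kd_l. unfold Ms. simpl. reflexivity.
  - intro k. unfold Ml. simpl. destruct (Nat.eqb k 0); ring.
Qed.

Lemma colsum r q y : (1 <= r)%nat ->
  (forall z, (z <= r - 1)%nat -> sum_f_R0 (fun x => q x z) r = 1) ->
  (y <= r)%nat -> sum_f_R0 (fun x => Mmat r q x y) r = 1.
Proof.
  intros hr hq hy. unfold Mmat, mmul. rewrite sum_swap.
  rewrite (sum_ext _ (fun k => Ml r q k y * sum_f_R0 (fun i => Ms q i k) r)).
  2:{ intro k. rewrite <- sum_scal_l. apply sum_ext. intro; ring. }
  rewrite (sum_eq _ (fun k => Ml r q k y)).
  - unfold Ml. destruct (Nat.eqb_spec y 0).
    + apply sum_kd_one. lia.
    + destruct (Nat.eqb_spec y r).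
      * apply sum_kd_one. lia.
      * apply hq. lia.
  - intros k Hk. unfold Ms. destruct (Nat.eqb_spec k 0).
    + subst. simpl. rewrite hq by lia. ring.
    + simpl. rewrite sum_kd_one by lia. ring.
Qed.

Lemma mmul_assoc r A B C i j : mmul r (mmul r A B) C i j = mmul r A (mmul r B C) i j.
Proof.
  unfold mmul. rewrite (sum_ext _ (fun k => sum_f_R0 (fun l => A i l * B l k * C k j) r)).
  - rewrite sum_swap. apply sum_ext. intro l. rewrite <- sum_scal_l. apply sum_ext. intro; ring.
  - intro k. rewrite (Rmult_comm _ (C k j)), <- sum_scal_l. apply sum_ext. intro; ring.
Qed.

Lemma mmul_ext r A A' B B' i j :
  (forall l, (l <= r)%nat -> A i l = A' i l) -> (forall l, (l <= r)%nat -> B l j = B' l j) ->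
  mmul r A B i j = mmul r A' B' i j.
Proof. intros H1 H2. unfold mmul. apply sum_eq. intros l Hl. rewrite H1, H2 by auto. reflexivity. Qed.

Lemma kd_sym a b : kd a b = kd b a.
Proof. unfold kd. destruct (Nat.eqb_spec a b), (Nat.eqb_spec b a); subst; try lia; reflexivity. Qed.

Lemma mpow_comm r A k i j : (i <= r)%nat -> (j <= r)%nat ->
  mmul r A (mpow r A k) i j = mmul r (mpow r A k) A i j.
Proof.
  revert i j. induction k; intros i j Hi Hj.
  - cbn [mpow]. unfold mmul.
    rewrite (sum_ext _ (fun l => kd j l * A i l)).
    2:{ intro l. rewrite kd_sym. ring. }
    rewrite sum_kd_pick by exact Hj. rewrite sum_kd_pick by exact Hi. reflexivity.
  - cbn [mpow].
    rewrite (mmul_ext r A A (mmul r A (mpow r A k)) (mmul r (mpow r A k) A)); auto.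
    rewrite <- mmul_assoc. reflexivity.
Qed.

Lemma mpow_S_r r A k i j : (i <= r)%nat -> (j <= r)%nat ->
  mpow r A (S k) i j = sum_f_R0 (fun l => mpow r A k i l * A l j) r.
Proof. intros. cbn [mpow]. apply mpow_comm; auto. Qed.

Lemma alpha_ext r q p00 p10 nu n1 n2 j :
  (forall s, (1 <= s <= j)%nat -> n1 s = n2 s) -> forall x,
  alpha r nu (Kk r q p00 p10 n1) j x = alpha r nu (Kk r q p00 p10 n2) j x.
Proof.
  induction j; intros H x; cbn [alpha]; [reflexivity|].
  apply sum_ext. intro y. rewrite IHj by (intros; apply H; lia).
  unfold Kk, EE. rewrite (H (S j)) by lia. reflexivity.
Qed.

Lemma alpha_tail r q p00 p10 nu n j d :
  is_prob_nat p00 -> is_prob_nat p10 -> (1 <= r)%nat ->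
  (forall z, (z <= r - 1)%nat -> sum_f_R0 (fun x => q x z) r = 1) ->
  (forall s, (j < s <= j + d)%nat -> n s = O) ->
  sum_f_R0 (alpha r nu (Kk r q p00 p10 n) (j + d)) r = sum_f_R0 (alpha r nu (Kk r q p00 p10 n) j) r.
Proof.
  intros h0 h1 hr hq. induction d; intros H.
  - rewrite Nat.add_0_r. reflexivity.
  - rewrite Nat.add_succ_r. cbn [alpha]. rewrite <- IHd by (intros; apply H; lia).
    rewrite sum_swap. apply sum_eq. intros y Hy.
    rewrite (sum_ext _ (fun x => alpha r nu (Kk r q p00 p10 n) (j + d) y * Mmat r q x y)).
    + rewrite sum_scal_l, colsum; auto. ring.
    + intro x. rewrite Kk_zero; auto. apply H. lia.
Qed.

Lemma alpha_iter r q p00 p10 nu n j d x :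
  is_prob_nat p00 -> is_prob_nat p10 ->
  (forall s, (j < s <= j + d)%nat -> n s = O) -> (x <= r)%nat ->
  alpha r nu (Kk r q p00 p10 n) (j + d) x =
  sum_f_R0 (fun z => mpow r (Mmat r q) d x z * alpha r nu (Kk r q p00 p10 n) j z) r.
Proof.
  intros h0 h1. revert x. induction d; intros x H Hx.
  - rewrite Nat.add_0_r. cbn [mpow]. rewrite sum_kd_pick; auto.
  - rewrite Nat.add_succ_r. cbn [alpha].
    rewrite (sum_eq _ (fun y => sum_f_R0 (fun z => Mmat r q x y * mpow r (Mmat r q) d y z
               * alpha r nu (Kk r q p00 p10 n) j z) r)).
    + rewrite sum_swap. apply sum_ext. intro z. cbn [mpow]. unfold mmul.
      rewrite (Rmult_comm _ (alpha _ _ _ _ _)), <- sum_scal_l. apply sum_ext. intro; ring.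
    + intros y Hy. rewrite IHd by (auto; intros; apply H; lia).
      rewrite Kk_zero by (auto; apply H; lia).
      rewrite (Rmult_comm _ (Mmat r q x y)), <- sum_scal_l. apply sum_ext. intro; ring.
Qed.

Lemma alpha_obs r q p00 p10 nu n j x : (1 <= n (S j))%nat ->
  alpha r nu (Kk r q p00 p10 n) (S j) x =
  sum_f_R0 (fun y => alpha r nu (Kk r q p00 p10 n) j y * Ml r q 0 y) r *
  (q x O * EE p00 p10 n (S j) x 0).
Proof.
  intros H. cbn [alpha]. rewrite Rmult_comm, <- sum_scal_l. apply sum_ext. intro y.
  rewrite Kk_pos by auto. ring.
Qed.

Lemma single r T q p00 p10 nu n t :
  is_prob_nat p00 -> is_prob_nat p10 -> (1 <= r)%nat ->
  (forall z, (z <= r - 1)%nat -> sum_f_R0 (fun x => q x z) r = 1) ->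
  (1 <= t <= T)%nat -> (1 <= n t)%nat -> (forall s, s <> t -> n s = O) ->
  sum_f_R0 (alpha r nu (Kk r q p00 p10 n) T) r =
  sum_f_R0 (fun y => alpha r nu (Kk r q p00 p10 (fun _ => O)) (t - 1) y * Ml r q 0 y) r *
  sum_f_R0 (fun x => q x O * EE p00 p10 n t x 0) r.
Proof.
  intros h0 h1 hr hq Ht hnt hn.
  replace T with (t + (T - t))%nat by lia.
  rewrite alpha_tail; auto; [|intros; apply hn; lia].
  destruct t as [|t0]; [lia|].
  rewrite (sum_ext _ (fun x => sum_f_R0 (fun y => alpha r nu (Kk r q p00 p10 n) t0 y * Ml r q 0 y) r *
  (q x O * EE p00 p10 n (S t0) x 0))).
  2:{ intro x. apply alpha_obs. auto. }
  rewrite sum_scal_l. replace (S t0 - 1)%nat with t0 by lia. f_equal.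
  apply sum_ext. intro y. rewrite (alpha_ext r q p00 p10 nu n (fun _ => O)); auto.
  intros s Hs. apply hn. lia.
Qed.

Lemma EE_mean p00 p10 n s x : n s = 1%nat ->
  EE p00 p10 n s x 0 = mean_nat (pem p00 p10 x 0).
Proof.
  intros H. unfold EE, mean_nat. rewrite H. f_equal. apply functional_extensionality. intro; ring.
Qed.

Lemma EE_mom2 p00 p10 n s x : n s = 2%nat ->
  EE p00 p10 n s x 0 = mom2_nat (pem p00 p10 x 0).
Proof. intros H. unfold EE, mom2_nat. rewrite H. reflexivity. Qed.

Lemma prod_single T t (ys : nat -> nat) m : (1 <= t <= T)%nat ->
  prod1 T (fun s => INR (ys s) ^ (if Nat.eqb s t then m else O)) = INR (ys t) ^ m.
Proof.
  intros H. rewrite <- (prod1_one T t (INR (ys t) ^ m)) by exact H. apply prod1_ext.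
  intros s _. destruct (Nat.eqb_spec s t); [subst; reflexivity|reflexivity].
Qed.

Lemma prod_double T t t' (ys : nat -> nat) : (1 <= t <= T)%nat -> (1 <= t' <= T)%nat -> t <> t' ->
  prod1 T (fun s => INR (ys s) ^ (if Nat.eqb s t then 1 else if Nat.eqb s t' then 1 else O)%nat)
  = INR (ys t) * INR (ys t').
Proof.
  intros H1 H2 H3.
  rewrite <- (prod1_one T t (INR (ys t))) by exact H1.
  rewrite <- (prod1_one T t' (INR (ys t'))) by exact H2.
  rewrite <- prod1_mul. apply prod1_ext. intros s _.
  destruct (Nat.eqb_spec s t), (Nat.eqb_spec s t'); subst; try lia; simpl; ring.
Qed.

Lemma m_split p00 p10 z :
  mean_nat (pem p00 p10 z 0) =
  mean_nat (pem p00 p10 1 0) + kd z 0 * (mean_nat (pem p00 p10 0 0) - mean_nat (pem p00 p10 1 0)).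
Proof.
  destruct z.
  - replace (kd 0 0) with 1 by reflexivity. ring.
  - replace (pem p00 p10 (S z) 0) with (pem p00 p10 1 0) by reflexivity.
    replace (kd (S z) 0) with 0 by reflexivity. ring.
Qed.

Lemma theta1_split r q p00 p10 :
  (1 <= r)%nat -> (forall z, (z <= r - 1)%nat -> sum_f_R0 (fun x => q x z) r = 1) ->
  theta1 r q p00 p10 = mean_nat (pem p00 p10 1 0) +
     q O O * (mean_nat (pem p00 p10 0 0) - mean_nat (pem p00 p10 1 0)).
Proof.
  intros hr hq. unfold theta1.
  rewrite (sum_ext _ (fun x => mean_nat (pem p00 p10 1 0) * q x O +
      kd x 0 * (q x O * (mean_nat (pem p00 p10 0 0) - mean_nat (pem p00 p10 1 0))))).
  - rewrite sum_plus, sum_scal_l, hq by lia. rewrite sum_kd_l. ring.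
  - intro x. rewrite m_split. ring.
Qed.

Lemma Wsplit r q p00 p10 (D : nat -> R) :
  sum_f_R0 (fun z => D z * (q z O * mean_nat (pem p00 p10 z 0))) r =
  mean_nat (pem p00 p10 1 0) * sum_f_R0 (fun z => D z * q z O) r +
  (mean_nat (pem p00 p10 0 0) - mean_nat (pem p00 p10 1 0)) * (D O * q O O).
Proof.
  rewrite (sum_ext _ (fun z => mean_nat (pem p00 p10 1 0) * (D z * q z O) +
      kd z 0 * ((mean_nat (pem p00 p10 0 0) - mean_nat (pem p00 p10 1 0)) * (D z * q z O)))).
  - rewrite sum_plus, sum_scal_l, sum_kd_l. reflexivity.
  - intro z. rewrite m_split. ring.
Qed.
Theorem mainTheorem5
  (r T : nat) (q : nat -> nat -> R) (p00 p10 : nat -> R) (nu : nat -> R)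
  (hr : (1 <= r)%nat) (hT : (1 <= T)%nat)
  (hq01 : forall x z, (x <= r)%nat -> (z <= r - 1)%nat -> 0 <= q x z <= 1)
  (hqsum : forall z, (z <= r - 1)%nat -> sum_f_R0 (fun x => q x z) r = 1)
  (hp00 : is_prob_nat p00) (hp10 : is_prob_nat p10)
  (hnu0 : forall x, (x <= r)%nat -> 0 <= nu x)
  (hnu1 : sum_f_R0 nu r = 1)
  (hq00 : 0 < q O O < 1)
  (htheta1 : 0 < theta1 r q p00 p10)
  (hmgf00 : finite_mgf_near0 p00) (hmgf10 : finite_mgf_near0 p10)
  (hdiag : diagonalizable r (Mmat r q)) :
  (forall t, (1 <= t <= T)%nat ->
     htmm_cov r T q p00 p10 nu t t =
     (theta1 r q p00 p10 * (theta3 r q p00 p10 + 1) + 1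
        - htmm_mean r T q p00 p10 nu t) * htmm_mean r T q p00 p10 nu t) /\
  (forall t t', (1 <= t')%nat -> (t' < t)%nat -> (t <= T)%nat ->
     htmm_cov r T q p00 p10 nu t t' =
     ((theta2 r q p00 p10
         - q O O * (1 - theta2 r q p00 p10) / (1 - q O O))
          * mu0 r q p00 p10 (t - t')
       + (1 - theta2 r q p00 p10) / (1 - q O O)
          * mu0 r q p00 p10 (t - t' + 1)
       - htmm_mean r T q p00 p10 nu t) * htmm_mean r T q p00 p10 nu t').
Proof.
  assert (Hth : theta1 r q p00 p10 <> 0) by lra.
  assert (hn2 : forall (m : nat) t, (m <= 2)%nat -> forall s, ((if Nat.eqb s t then m else O) <= 2)%nat).
  { intros m t Hm s. destruct (Nat.eqb s t); lia. }
  set (P := fun j => sum_f_R0 (fun y => alpha r nu (Kk r q p00 p10 (fun _ => O)) j y * Ml r q 0 y) r).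
  assert (Hmom : forall t m, (1 <= t <= T)%nat -> (1 <= m <= 2)%nat ->
     htmm_E r T q p00 p10 nu (fun ys => INR (ys t) ^ m) =
     P (t - 1)%nat * sum_f_R0 (fun x => q x O * EE p00 p10 (fun s => if Nat.eqb s t then m else O) t x 0) r).
  { intros t m Ht Hm.
    replace (fun ys => INR (ys t) ^ m) with
      (fun ys : nat -> nat => prod1 T (fun s => INR (ys s) ^ (if Nat.eqb s t then m else O))).
    2:{ apply functional_extensionality. intro ys. apply prod_single. auto. }
    rewrite main_E; auto; [|apply hn2; lia].
    apply single; auto.
    - rewrite Nat.eqb_refl. lia.
    - intros s Hs. destruct (Nat.eqb_spec s t); [lia|reflexivity]. }
  assert (Hmean : forall t, (1 <= t <= T)%nat ->
     htmm_mean r T q p00 p10 nu t = P (t - 1)%nat * theta1 r q p00 p10).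
  { intros t Ht. unfold htmm_mean.
    replace (fun ys => INR (ys t)) with (fun ys : nat -> nat => INR (ys t) ^ 1).
    2:{ apply functional_extensionality. intro; ring. }
    rewrite Hmom by (auto; lia). f_equal. unfold theta1. apply sum_ext. intro x.
    rewrite EE_mean; [reflexivity|]. rewrite Nat.eqb_refl. reflexivity. }
  split.
  - intros t Ht. unfold htmm_cov. rewrite Hmean by auto.
    replace (fun ys => INR (ys t) * INR (ys t)) with (fun ys : nat -> nat => INR (ys t) ^ 2).
    2:{ apply functional_extensionality. intro; ring. }
    rewrite Hmom by (auto; lia).
    rewrite (sum_ext _ (fun x => q x O * mom2_nat (pem p00 p10 x 0))).
    2:{ intro x. rewrite EE_mom2; [reflexivity|]. rewrite Nat.eqb_refl. reflexivity. }
    unfold theta3, inner_var. field. exact Hth.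
  - intros t t' Ht' Htt Ht. unfold htmm_cov.
    rewrite (Hmean t') by lia.
    set (nC := fun s => if Nat.eqb s t then 1%nat else if Nat.eqb s t' then 1%nat else O).
    replace (fun ys => INR (ys t) * INR (ys t')) with
      (fun ys : nat -> nat => prod1 T (fun s => INR (ys s) ^ nC s)).
    2:{ apply functional_extensionality. intro ys. apply prod_double; lia. }
    rewrite main_E; auto.
    2:{ intro s. unfold nC. destruct (Nat.eqb s t), (Nat.eqb s t'); lia. }
    destruct t' as [|a]; [lia|]. destruct t as [|t0]; [lia|].
    destruct (Nat.le_exists_sub (S a) t0) as [d [Hd _]]; [lia|].
    rewrite Nat.add_comm in Hd. subst t0.
    replace (S (S a + d) - S a)%nat with (S d) by lia.
    replace (S d + 1)%nat with (S (S d)) by lia.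
    replace (S a - 1)%nat with a by lia.
    set (W' := sum_f_R0 (fun y => Ml r q 0 y * sum_f_R0 (fun z => mpow r (Mmat r q) d y z *
                  (q z O * mean_nat (pem p00 p10 z 0))) r) r).
    assert (HV : sum_f_R0 (alpha r nu (Kk r q p00 p10 nC) T) r = P a * theta1 r q p00 p10 * W').
    { assert (HnC0 : forall s, s <> S (S a + d) -> s <> S a -> nC s = O).
      { intros s H1 H2. unfold nC. destruct (Nat.eqb_spec s (S (S a + d))); [lia|].
        destruct (Nat.eqb_spec s (S a)); [lia|reflexivity]. }
      assert (HnCt : nC (S (S a + d)) = 1%nat) by (unfold nC; rewrite Nat.eqb_refl; reflexivity).
      assert (HnCt' : nC (S a) = 1%nat).
      { unfold nC. destruct (Nat.eqb_spec (S a) (S (S a + d))); [lia|]. rewrite Nat.eqb_refl. reflexivity. }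
      replace T with (S (S a + d) + (T - S (S a + d)))%nat by lia.
      rewrite alpha_tail; auto; [|intros s Hs; apply HnC0; lia].
      rewrite (sum_ext _ (fun x => sum_f_R0 (fun y => alpha r nu (Kk r q p00 p10 nC) (S a + d) y * Ml r q 0 y) r *
          (q x O * EE p00 p10 nC (S (S a + d)) x 0))).
      2:{ intro x. apply alpha_obs. lia. }
      rewrite sum_scal_l.
      replace (sum_f_R0 (fun x => q x O * EE p00 p10 nC (S (S a + d)) x 0) r) with (theta1 r q p00 p10).
      2:{ unfold theta1. apply sum_ext. intro x. rewrite EE_mean by exact HnCt. reflexivity. }
      rewrite (sum_eq _ (fun y => P a * (Ml r q 0 y * sum_f_R0 (fun z => mpow r (Mmat r q) d y z *
                  (q z O * mean_nat (pem p00 p10 z 0))) r))).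
      - rewrite sum_scal_l. fold W'. ring.
      - intros y Hy. rewrite alpha_iter; auto; [|intros s Hs; apply HnC0; lia].
        rewrite (sum_ext (fun z => mpow r (Mmat r q) d y z * alpha r nu (Kk r q p00 p10 nC) (S a) z)
           (fun z => P a * (mpow r (Mmat r q) d y z * (q z O * mean_nat (pem p00 p10 z 0))))).
        + rewrite sum_scal_l. ring.
        + intro z. rewrite alpha_obs by lia. rewrite EE_mean by exact HnCt'.
          unfold P. rewrite (sum_ext (fun y0 => alpha r nu (Kk r q p00 p10 nC) a y0 * Ml r q 0 y0)
            (fun y0 => alpha r nu (Kk r q p00 p10 (fun _ => O)) a y0 * Ml r q 0 y0)).
          * ring.
          * intro y0. rewrite (alpha_ext r q p00 p10 nu nC (fun _ => O)); auto.
            intros s Hs. apply HnC0; lia. }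
    rewrite HV.
    set (mA := mean_nat (pem p00 p10 0 0)). set (mB := mean_nat (pem p00 p10 1 0)).
    set (D0 := sum_f_R0 (fun y => Ml r q 0 y * mpow r (Mmat r q) d y 0) r).
    set (W := sum_f_R0 (fun y => Ml r q 0 y * sum_f_R0 (fun z => mpow r (Mmat r q) d y z * q z O) r) r).
    assert (HW' : W' = mB * W + (mA - mB) * (D0 * q O O)).
    { unfold W', W, D0.
      rewrite (sum_ext _ (fun y => mB * (Ml r q 0 y * sum_f_R0 (fun z => mpow r (Mmat r q) d y z * q z O) r)
          + (mA - mB) * q O O * (Ml r q 0 y * mpow r (Mmat r q) d y 0))).
      - rewrite sum_plus, !sum_scal_l. ring.
      - intro y. rewrite Wsplit. fold mA mB. ring. }
    assert (Hm1 : mpow r (Mmat r q) (S d) 0 0 = q O O * D0).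
    { cbn [mpow]. unfold mmul, D0. rewrite <- sum_scal_l. apply sum_ext. intro y.
      rewrite Mmat_0y. ring. }
    assert (Hm2 : mpow r (Mmat r q) (S (S d)) 0 0 = q O O * W).
    { cbn [mpow]. unfold mmul at 1, W. rewrite <- sum_scal_l. apply sum_eq. intros y Hy.
      rewrite Mmat_0y.
      change (mmul r (Mmat r q) (mpow r (Mmat r q) d) y 0) with (mpow r (Mmat r q) (S d) y 0).
      rewrite (mpow_S_r r (Mmat r q) d y 0) by lia.
      rewrite (sum_ext (fun z => mpow r (Mmat r q) d y z * q z O)
                  (fun z => mpow r (Mmat r q) d y z * Mmat r q z 0)).
      - ring.
      - intro z. rewrite Mmat_x0. reflexivity. }
    assert (HB : (theta2 r q p00 p10 - q O O * (1 - theta2 r q p00 p10) / (1 - q O O)) *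
        mu0 r q p00 p10 (S d) + (1 - theta2 r q p00 p10) / (1 - q O O) * mu0 r q p00 p10 (S (S d)) = W').
    { unfold mu0, theta2. rewrite Hm1, Hm2, HW'. fold mA.
      assert (Ht1 : theta1 r q p00 p10 = mB + q O O * (mA - mB)) by (apply theta1_split; auto).
      rewrite Ht1 in Hth |- *. field. split; [lra|split; lra]. }
    rewrite <- HB. ring.
Qed.
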